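(* Let $I=(f_1,\ldots,f_r)\subset\mathbb{C}[x_1,\ldots,x_n]$ be an ideal generated by quasi-homogeneous polynomials (with respect to a common system of positive weights on $x_1,\ldots,x_n$), and let \[f_I(x_1,\ldots,x_n,y_1,\ldots,y_r)=\sum_{i=1}^r y_i f_i(x_1,\ldots,x_n).\] Then $f_I$ is a quasi-homogeneous polynomial (for suitable positive weights on the $y_i$), and its global Milnor fibre $f_I^{-1}(1)\subset\mathbb{C}^{n+r}$ is homotopy equivalent to $\mathbb{C}^n\setminus V(I)$, where $V(I)$ is the zero set of $I$.
   Context: A polynomial $g$ is quasi-homogeneous with respect to positive weights $w_1,\ldots,w_N$ if $g(t^{w_1}z_1,\ldots,t^{w_N}z_N)=t^d g(z)$ for some $d$; an ideal is quasi-homogeneous if generated by such polynomials for common weights. The global Milnor fibre of a quasi-homogeneous polynomial $g$ is $g^{-1}(1)$. *)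

(* Defs.v *)
From HB Require Import structures.
From mathcomp Require Import all_boot all_order all_algebra.
From mathcomp Require Import mpoly.
From mathcomp Require Import all_classical all_reals.
From mathcomp Require Import topology normedtype exp.
From mathcomp Require Import complex.

Set Implicit Arguments.
Unset Strict Implicit.
Unset Printing Implicit Defensive.

Import Order.TTheory GRing.Theory Num.Theory.
Import numFieldNormedType.Exports.
Local Open Scope classical_set_scope.
Local Open Scope ring_scope.
Local Open Scope complex_scope.

(* The complex numbers C = R[i] over the reals R, as a numClosedFieldType
   (so that it carries MathComp-Analysis's norm topology, |z| = complex modulus). *)
Definition Cplx (R : rcfType) : numClosedFieldType := R[i].

Definition ev (C : comNzRingType) (N : nat) (p : mpoly N C)
  (z : 'rV[C]_N) : C := meval (fun k => z ord0 k) p.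

Definition var (C : comNzRingType) (N : nat) (k : 'I_N) : mpoly N C :=
  mpolyX C (mnm1 k).

Definition quasi_homogeneous (R : realType) (N : nat) (w : 'I_N -> R) (d : R)
    (g : mpoly N (Cplx R)) : Prop :=
  forall t : R, 0 < t -> forall z : 'rV[Cplx R]_N,
    ev g (\row_k ((t `^ w k)%:C * z ord0 k : Cplx R)) = ((t `^ d)%:C : Cplx R) * ev g z.

(* f_I (x, y) = sum_i y_i f_i(x), a polynomial in the n + r variables
   x_1..x_n (indices lshift r j) and y_1..y_r (indices rshift n i). *)
Definition fI (C : comNzRingType) (n r : nat) (f : 'I_r -> mpoly n C)
  : mpoly (n + r) C :=
  \sum_(i < r) var C (rshift n i) *
     comp_mpoly [tuple var C (lshift r j) | j < n] (f i).

Definition catw (R : Type) (n r : nat) (w : 'I_n -> R) (v : 'I_r -> R)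
  (k : 'I_(n + r)) : R :=
  match fintype.split k with inl j => w j | inr i => v i end.

Definition milnor_fibre (C : comNzRingType) (N : nat) (g : mpoly N C)
  : set 'rV[C]_N := [set z | ev g z = 1].

Definition in_ideal (C : comNzRingType) (n r : nat)
  (f : 'I_r -> mpoly n C) (p : mpoly n C) : Prop :=
  exists g : 'I_r -> mpoly n C, p = \sum_(i < r) g i * f i.

Definition zero_set (C : comNzRingType) (n r : nat)
  (f : 'I_r -> mpoly n C) : set 'rV[C]_n :=
  [set z | forall p, in_ideal f p -> ev p z = 0].

Definition homotopic_on (R : realType) (X Y : topologicalType)
  (A : set X) (B : set Y) (f g : X -> Y) : Prop :=
  exists H : R * X -> Y,
    {within `[0%R, 1%R] `*` A, continuous H} /\
    (forall t x, `[0%R, 1%R]%classic t -> A x -> B (H (t, x))) /\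
    (forall x, A x -> H (0, x) = f x) /\
    (forall x, A x -> H (1, x) = g x).

Definition homotopy_equivalent (R : realType) (X Y : topologicalType)
  (A : set X) (B : set Y) : Prop :=
  exists (f : X -> Y) (g : Y -> X),
    {within A, continuous f} /\ (f @` A `<=` B) /\
    {within B, continuous g} /\ (g @` B `<=` A) /\
    homotopic_on R A A (g \o f) id /\ homotopic_on R B B (f \o g) id.

(* Main.v *)
Require Import Defs.
From HB Require Import structures.
From mathcomp Require Import all_boot all_order all_algebra.
From mathcomp Require Import mpoly.
From mathcomp Require Import all_classical all_reals.
From mathcomp Require Import topology normedtype exp.
From mathcomp Require Import complex.
From mathcomp Require Import lra ring.
Import Order.TTheory GRing.Theory Num.Theory.
Import numFieldNormedType.Exports.
Local Open Scope classical_set_scope.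
Local Open Scope ring_scope.
Section S.
Variable R : realType.
Local Notation C := (Cplx R).
Lemma cont_eq (X Y : topologicalType) (f g : X -> Y) x :
  (forall y, f y = g y) -> {for x, continuous f} -> {for x, continuous g}.
Proof. by move=> /funext ->. Qed.
Lemma cont_sum (X : topologicalType) (I : Type) (s : seq I) (F : I -> X -> C) x :
  (forall i, {for x, continuous (F i)}) -> {for x, continuous (fun y => \sum_(i <- s) F i y)}.
Proof.
move=> H; elim: s => [|a s IH].
  apply: (@cont_eq _ _ (fun=> 0)) => [y|]; first by rewrite big_nil. exact: cvg_cst.
apply: (@cont_eq _ _ (fun y => F a y + \sum_(i <- s) F i y)) => [y|]; first by rewrite big_cons.
exact: (continuousD (H a) IH).
Qed.
Lemma cont_prod (X : topologicalType) (I : Type) (s : seq I) (F : I -> X -> C) x :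
  (forall i, {for x, continuous (F i)}) -> {for x, continuous (fun y => \prod_(i <- s) F i y)}.
Proof.
move=> H; elim: s => [|a s IH].
  apply: (@cont_eq _ _ (fun=> (1:C))) => [y|]; first by rewrite big_nil. exact: cvg_cst.
apply: (@cont_eq _ _ (fun y => F a y * \prod_(i <- s) F i y)) => [y|]; first by rewrite big_cons.
exact: (continuousM (H a) IH).
Qed.
Lemma cont_exp (X : topologicalType) (F : X -> C) x k :
  {for x, continuous F} -> {for x, continuous (fun y => F y ^+ k)}.
Proof.
move=> H; elim: k => [|k IH].
  apply: (@cont_eq _ _ (fun=> (1:C))) => [y|]; first by rewrite expr0. exact: cvg_cst.
apply: (@cont_eq _ _ (fun y => F y * F y ^+ k)) => [y|]; first by rewrite exprS.
exact: (continuousM H IH).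
Qed.
Lemma cont_entry m n i j : continuous (fun M : 'M[C]_(m,n) => M i j).
Proof.
move=> u A /(nbhs_ballP (u i j) A)[e /= e0 eA].
apply/(nbhs_ballP u); exists e => //= v [_ uv]; exact: eA.
Qed.
Lemma cont_ev N (p : mpoly N C) : continuous (ev p).
Proof.
move=> z.
apply: (@cont_eq _ _ (fun y : 'rV[C]_N => \sum_(m <- msupp p) p@_m * \prod_i (y ord0 i) ^+ m i)).
  by move=> y; rewrite /ev mevalE.
apply: cont_sum => mm; apply: continuousM.
  exact: (@cst_continuous _ _ p@_mm z).
apply: (@cont_prod _ _ (index_enum _) (fun i (y : 'rV[C]_N) => y ord0 i ^+ mm i)) => i.
apply: cont_exp; exact: cont_entry.
Qed.
Lemma cont_fst (U V : topologicalType) (p : U * V) : {for p, continuous (@fst U V)}.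
Proof. exact: cvg_fst. Qed.
Lemma cont_snd (U V : topologicalType) (p : U * V) : {for p, continuous (@snd U V)}.
Proof. exact: cvg_snd. Qed.
Lemma cont_RC : continuous (fun t : R => (t%:C)%C : C).
Proof.
move=> u A /(nbhs_ballP ((u%:C)%C : C) A)[e e0 eA].
have e0' : 0 < e := e0.
apply/(nbhs_ballP u); exists (complex.Re e); first by move: e0'; rewrite ltcE /= => /andP[].
move=> v uv; apply: eA.
move: uv; rewrite /ball /= -rmorphB normc_def /= expr0n /= addr0 sqrtr_sqr.
move: e0'; rewrite !ltcE /= => /andP[/eqP -> _] ->.
by rewrite eqxx.
Qed.
Lemma cont_mx (X : topologicalType) m n (h : X -> 'M[C]_(m,n)) x :
  (forall i j, {for x, continuous (fun y => h y i j)}) -> {for x, continuous h}.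
Proof.
move=> H A [P HP PA].
have : \forall y \near x, forall ij : 'I_m * 'I_n, P ij.1 ij.2 (h y ij.1 ij.2).
  apply: filter_forall => -[i j].
  exact: (H i j (P i j) (HP i j)).
apply: filterS => y Hy; apply: PA => i j; exact: (Hy (i, j)).
Qed.

Lemma cont_conj : continuous (fun z : C => z^*).
Proof.
move=> u A /(nbhs_ballP (u^*) A)[e e0 eA].
apply/(nbhs_ballP u); exists e => // v uv; apply: eA.
by move: uv; rewrite /ball /= -rmorphB norm_conjC.
Qed.
End S.
Section A.
Variable R : realType.
Local Notation C := (Cplx R).
Variables (n r : nat) (f : 'I_r -> mpoly n C).

Lemma ev_var N (k : 'I_N) (z : 'rV[C]_N) : ev (var C k) z = z ord0 k.
Proof. by rewrite /ev /var mevalXU. Qed.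

Lemma ev_fI (z : 'rV[C]_(n + r)) :
  ev (fI f) z = \sum_i z ord0 (rshift n i) * ev (f i) (lsubmx z).
Proof.
rewrite /fI /ev raddf_sum /=; apply: eq_bigr => i _.
rewrite mevalM -/(ev _ _) ev_var; congr (_ * _).
rewrite comp_mpoly_meval; apply: meval_eq => k.
by rewrite tnth_mktuple -/(ev _ _) ev_var mxE.
Qed.

Lemma ev_fI_row (x : 'rV[C]_n) (y : 'rV[C]_r) :
  ev (fI f) (row_mx x y) = \sum_i y ord0 i * ev (f i) x.
Proof.
by rewrite ev_fI row_mxKl; apply: eq_bigr => i _; rewrite row_mxEr.
Qed.

Lemma notzero_set x : (~` zero_set f) x <-> exists j, ev (f j) x != 0.
Proof.
split.
  move=> H; apply: contrapT => Hall; apply: H => p [g ->].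
  rewrite /ev raddf_sum big1 // => i _ /=; rewrite mevalM.
  have Hi : ev (f i) x = 0.
    by apply: contrapT => Hn; apply: Hall; exists i; apply/eqP.
  by rewrite /ev in Hi; rewrite Hi mulr0.
move=> [j Hj] H; move/eqP: Hj; apply.
apply: H; exists (fun i => (i == j)%:R).
rewrite (bigD1 j) //= eqxx mul1r big1 ?addr0 // => i /negbTE ->.
by rewrite mul0r.
Qed.

Definition Sf (x : 'rV[C]_n) : C := \sum_j (ev (f j) x)^* * ev (f j) x.
Definition yg (x : 'rV[C]_n) : 'rV[C]_r := \row_i ((ev (f i) x)^* / Sf x).

Lemma Sf_neq0 x : (~` zero_set f) x -> Sf x != 0.
Proof.
move/notzero_set => [j Hj]; apply/negP => /eqP S0.
have Hge : forall i : 'I_r, true -> 0 <= (ev (f i) x)^* * ev (f i) x.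
  by move=> i _; rewrite mulrC mul_conjC_ge0.
have := @psumr_eq0P _ _ _ _ Hge S0 j isT.
by move/eqP; rewrite mulf_eq0 conjC_eq0 orbb (negbTE Hj).
Qed.

Lemma ev_gg x : (~` zero_set f) x -> ev (fI f) (row_mx x (yg x)) = 1.
Proof.
move=> Hx; rewrite ev_fI_row.
under eq_bigr do rewrite mxE mulrAC.
by rewrite -mulr_suml divff // Sf_neq0.
Qed.

Lemma fib_B z : milnor_fibre (fI f) z -> (~` zero_set f) (lsubmx z).
Proof.
rewrite /milnor_fibre /= -{1}(hsubmxK z) ev_fI_row => H.
apply/notzero_set; apply: contrapT => Hall.
move: H; rewrite big1 => [/esym/eqP|i _]; first by rewrite oner_eq0.
have Hi : ev (f i) (lsubmx z) = 0.
  by apply: contrapT => Hn; apply: Hall; exists i; apply/eqP.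
by rewrite Hi mulr0.
Qed.

Lemma cont_conj_ev N (p : mpoly N C) x : {for x, continuous (fun y => (ev p y)^*)}.
Proof.
apply: (@cont_eq _ _ ((fun z : C => z^*) \o ev p)) => [y //|].
exact: (continuous_comp (cont_ev _ _ p x) (cont_conj _ _)).
Qed.

Lemma cont_Sf x : {for x, continuous Sf}.
Proof.
apply: (@cont_sum R _ _ (index_enum _) (fun j y => (ev (f j) y)^* * ev (f j) y)) => j.
apply: continuousM; last exact: cont_ev.
exact: cont_conj_ev.
Qed.

Lemma cont_yg_entry a x : (~` zero_set f) x ->
  {for x, continuous (fun y => (ev (f a) y)^* / Sf y)}.
Proof.
move=> Bx; apply: continuousM.
  exact: cont_conj_ev.
by apply: continuousV; [exact: Sf_neq0 | exact: cont_Sf].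
Qed.

Lemma cont_lsub (z : 'rV[C]_(n + r)) : {for z, continuous (@lsubmx C 1 n r)}.
Proof.
apply: cont_mx => i j.
apply: (@cont_eq _ _ (fun y : 'rV[C]_(n+r) => y i (lshift r j))) => [y|]; first by rewrite mxE.
exact: cont_entry.
Qed.

Lemma cont_rsub (z : 'rV[C]_(n + r)) : {for z, continuous (@rsubmx C 1 n r)}.
Proof.
apply: cont_mx => i j.
apply: (@cont_eq _ _ (fun y : 'rV[C]_(n+r) => y i (rshift n j))) => [y|]; first by rewrite mxE.
exact: cont_entry.
Qed.

Lemma cont_gg x : (~` zero_set f) x ->
  {for x, continuous (fun y => row_mx y (yg y))}.
Proof.
move=> Bx; apply: cont_mx => i j.
rewrite -(splitK j); case: (fintype.split j) => a /=.
  apply: (@cont_eq _ _ (fun y : 'rV[C]_n => y i a)) => [y|]; first by rewrite row_mxEl.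
  exact: cont_entry.
apply: (@cont_eq _ _ (fun y => (ev (f a) y)^* / Sf y)) => [y|]; first by rewrite row_mxEr mxE.
exact: cont_yg_entry.
Qed.

Definition H1 (p : R * 'rV[C]_(n + r)) : 'rV[C]_(n + r) :=
  row_mx (lsubmx p.2)
    (((1 - p.1)%:C)%C *: yg (lsubmx p.2) + ((p.1)%:C)%C *: rsubmx p.2).

Lemma cont_H1 t z : (~` zero_set f) (lsubmx z) -> {for (t, z), continuous H1}.
Proof.
move=> Bz; apply: cont_mx => i j.
rewrite -(splitK j); case: (fintype.split j) => a /=.
  apply: (@cont_eq _ _ ((fun y : 'rV[C]_(n+r) => y i (lshift r a)) \o snd)) => [y|].
    by rewrite /H1 row_mxEl mxE.
  by apply: continuous_comp; [exact: cont_snd | exact: cont_entry].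
apply: (@cont_eq _ _ (fun p : R * 'rV[C]_(n + r) => ((1 - p.1)%:C)%C * ((ev (f a) (lsubmx p.2))^* / Sf (lsubmx p.2)) + ((p.1)%:C)%C * p.2 i (rshift n a) : C)) => [y|].
  by rewrite /H1 row_mxEr !mxE.
apply: continuousD; apply: continuousM.
- apply: (@cont_eq _ _ ((fun s : R => (s%:C)%C : C) \o ((fun=> (1:R)) - (@fst R 'rV[C]_(n + r))))) => [y //|].
  apply: continuous_comp; last exact: cont_RC.
  apply: continuousB; [exact: cst_continuous | exact: cont_fst].
- apply: (@cont_eq _ _ ((fun y => (ev (f a) y)^* / Sf y) \o ((@lsubmx C 1 n r) \o (@snd R 'rV[C]_(n + r))))) => [y //|].
  apply: continuous_comp; last exact: cont_yg_entry.
  by apply: continuous_comp; [exact: cont_snd | exact: cont_lsub].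
- apply: (@cont_eq _ _ ((fun s : R => (s%:C)%C : C) \o (@fst R 'rV[C]_(n + r)))) => [y //|].
  by apply: continuous_comp; [exact: cont_fst | exact: cont_RC].
- apply: (@cont_eq _ _ ((fun y : 'rV[C]_(n + r) => y i (rshift n a)) \o (@snd R 'rV[C]_(n + r)))) => [y //|].
  by apply: continuous_comp; [exact: cont_snd | exact: cont_entry].
Qed.

Lemma sum_yg x : (~` zero_set f) x -> \sum_i (ev (f i) x)^* / Sf x * ev (f i) x = 1.
Proof.
move/ev_gg; rewrite ev_fI_row.
by under eq_bigr do rewrite mxE.
Qed.

Lemma fib_sum z : milnor_fibre (fI f) z ->
  \sum_i z ord0 (rshift n i) * ev (f i) (lsubmx z) = 1.
Proof. by rewrite /milnor_fibre /= ev_fI. Qed.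

Lemma H1_fib t z : milnor_fibre (fI f) z -> milnor_fibre (fI f) (H1 (t, z)).
Proof.
move=> Fz; have Bz := fib_B z Fz.
rewrite /milnor_fibre /= /H1 /= ev_fI_row.
under eq_bigr do rewrite !mxE mulrDl -!mulrA.
rewrite big_split /= -!mulr_sumr.
rewrite (eq_bigr (fun i => (ev (f i) (lsubmx z))^* / Sf (lsubmx z) * ev (f i) (lsubmx z))); last by move=> i _; rewrite mulrA.
rewrite sum_yg // fib_sum // !mulr1.
by rewrite -rmorphD subrK rmorph1.
Qed.

Lemma homeq : homotopy_equivalent R (milnor_fibre (fI f)) (~` zero_set f).
Proof.
exists (@lsubmx C 1 n r), (fun x => row_mx x (yg x)).
split; [|split; [|split; [|split; [|split]]]].
- apply: continuous_subspaceT => z; exact: cont_lsub.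
- by move=> _ [z Fz <-]; exact: fib_B.
- apply: continuous_in_subspaceT => x; rewrite inE => Bx; exact: cont_gg.
- by move=> _ [x Bx <-]; exact: ev_gg.
- exists H1; split; [|split; [|split]].
  + apply: continuous_in_subspaceT => -[t z]; rewrite inE => -[_ Fz].
    by apply: cont_H1; exact: fib_B.
  + by move=> t z _ Fz; exact: H1_fib.
  + move=> z _ /=; rewrite /H1 /= subr0 rmorph1 rmorph0 scale1r scale0r addr0.
    by [].
  + move=> z _; rewrite /H1 /= subrr rmorph0 rmorph1 scale0r add0r scale1r.
    by rewrite hsubmxK.
- exists snd; split; [|split; [|split]].
  + apply: continuous_subspaceT => p; exact: cont_snd.
  + by move=> t x _ Bx.
  + by move=> x _ /=; rewrite row_mxKl.
  + by [].
Qed.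

Lemma catw_l (w : 'I_n -> R) (v : 'I_r -> R) k : catw w v (lshift r k) = w k.
Proof. by rewrite /catw (unsplitK (inl _ k : 'I_n + 'I_r)). Qed.
Lemma catw_r (w : 'I_n -> R) (v : 'I_r -> R) k : catw w v (rshift n k) = v k.
Proof. by rewrite /catw (unsplitK (inr _ k : 'I_n + 'I_r)). Qed.

Lemma qh_part (w : 'I_n -> R) :
  (forall i, exists d : R, quasi_homogeneous w d (f i)) ->
  exists (v : 'I_r -> R) (D : R),
      (forall i, 0 < v i) /\ quasi_homogeneous (catw w v) D (fI f).
Proof.
move=> H; have [d Hd] := boolp.choice H.
pose D := 1 + \sum_i `|d i|.
exists (fun i => D - d i), D; split.
  move=> i; rewrite subr_gt0 /D (bigD1 i) //=.
  have h1 : 0 <= \sum_(j | j != i) `|d j| by apply: sumr_ge0.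
  have h2 := ler_norm (d i).
  lra.
move=> t t0 z; rewrite !ev_fI mulr_sumr; apply: eq_bigr => i _.
have -> : lsubmx (\row_k ((t `^ catw w (fun i => D - d i) k)%:C * z ord0 k : Cplx R)%C)
   = \row_k ((t `^ w k)%:C * (lsubmx z) ord0 k : Cplx R)%C.
  by apply/rowP => k; rewrite !mxE catw_l.
rewrite Hd // mxE catw_r.
have tn0 : t != 0 := lt0r_neq0 t0.
have -> : (t `^ D) = t `^ (D - d i) * t `^ d i.
  by rewrite -powRD ?subrK // tn0 implybT.
rewrite rmorphM /=.
ring.
Qed.
End A.

Theorem mainTheorem2 (R : realType) (n r : nat)
    (f : 'I_r -> mpoly n (Cplx R)) (w : 'I_n -> R) :
  (forall j, 0 < w j) ->
  (forall i, exists d : R, quasi_homogeneous w d (f i)) ->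
  (exists (v : 'I_r -> R) (D : R),
      (forall i, 0 < v i) /\ quasi_homogeneous (catw w v) D (fI f)) /\
  homotopy_equivalent R (milnor_fibre (fI f)) (~` zero_set f).
Proof.
move=> _ Hq; split; first exact: qh_part.
exact: homeq.
Qed.
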